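(* Let $a\in\mathbb{R}$ and let $\alpha_0,\alpha_1,\alpha_2,\alpha_3>0$ be fixed. For $b>a$, $A>0$, $B>0$ define \[ Q_0(x)=\begin{cases} A, & a\le x<b,\\ -B, & b\le x,\end{cases} \] and let $u$ be the solution of \[ u''''(x)+Q_0(x)u(x)=0,\qquad x>a, \] satisfying $u(a)=\alpha_0$, $u'(a)=\alpha_1$, $u''(a)=\alpha_2$, $u'''(a)=\alpha_3$. Then (given $a$) one can choose $b>a$, $A>0$ and $B>0$ such that \[ u'(\zeta)=u'''(\zeta)=0 \] for some $\zeta\in(b,\infty)$.
   Context: Since $Q_0$ is piecewise constant, the solution $u$ is understood as the function $u\in C^3[a,\infty)$ which satisfies the differential equation on each of the intervals $(a,b)$ and $(b,\infty)$ (equivalently, $u'''$ is absolutely continuous and the equation holds almost everywhere). *)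

(* Defs.v *)
From Stdlib Require Import Reals.
From Coquelicot Require Import Coquelicot.
Open Scope R_scope.

Definition Q0 (a b A B : R) (x : R) : R :=
  if Rlt_dec x b then A else - B.

(* [is_solution a b A B al0 al1 al2 al3 u u1 u2 u3]:
   u is a C^3 function on [a, oo) with u' = u1, u'' = u2, u''' = u3,
   u''' differentiable on (a,b) and on (b,oo) with u'''' + Q0 u = 0 there,
   and initial data u^(k)(a) = al_k.  Derivatives at the endpoint a are
   one-sided; they are encoded by right-continuity of u, u1, u2, u3 at a
   (which, together with the interior derivative relations, is equivalent
   to u in C^3[a, oo)). *)
Definition is_solution (a b A B al0 al1 al2 al3 : R)
    (u u1 u2 u3 : R -> R) : Prop :=
  (forall x, a < x ->
     is_derive u x (u1 x) /\ is_derive u1 x (u2 x) /\ is_derive u2 x (u3 x)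
     /\ continuous u3 x) /\
  filterlim u (at_right a) (locally (u a)) /\
  filterlim u1 (at_right a) (locally (u1 a)) /\
  filterlim u2 (at_right a) (locally (u2 a)) /\
  filterlim u3 (at_right a) (locally (u3 a)) /\
  (forall x, a < x -> x <> b -> is_derive u3 x (- (Q0 a b A B x * u x))) /\
  u a = al0 /\ u1 a = al1 /\ u2 a = al2 /\ u3 a = al3.

(* Main.v *)
Require Import Defs.
From Stdlib Require Import Reals Lra.
From Coquelicot Require Import Coquelicot.
Open Scope R_scope.
Definition chf t := (exp t + exp (-t))/2.
Definition shf t := (exp t - exp (-t))/2.
Definition P (t c0 c1 c2 c3 : R) := c0 * (chf t * cos t) + c1 * ((chf t * sin t + shf t * cos t)/2) + c2 * (shf t * sin t / 2) + c3 * ((chf t * sin t - shf t * cos t)/4).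
Definition Qf (t p0 p1 p2 p3 : R) := p0 * chf t + p1 * shf t + p2 * cos t + p3 * sin t.
Lemma P_deriv t c0 c1 c2 c3: is_derive (fun t => P t c0 c1 c2 c3) t (P t c1 c2 c3 (-4*c0)).
Proof. unfold P, chf, shf. auto_derive. auto. simpl. field. Qed.
Lemma Qf_deriv t p0 p1 p2 p3: is_derive (fun t => Qf t p0 p1 p2 p3) t (Qf t p1 p0 p3 (-p2)).
Proof. unfold Qf, chf, shf. auto_derive. auto. simpl. field. Qed.
Lemma P_comp m a x c0 c1 c2 c3 : is_derive (fun x => P (m*(x-a)) c0 c1 c2 c3) x (m * P (m*(x-a)) c1 c2 c3 (-4*c0)).
Proof.
  apply (is_derive_comp (fun t => P t c0 c1 c2 c3) (fun x => m*(x-a))).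
  apply P_deriv. auto_derive; auto; ring.
Qed.
Lemma Qf_comp k b x p0 p1 p2 p3 : is_derive (fun x => Qf (k*(x-b)) p0 p1 p2 p3) x (k * Qf (k*(x-b)) p1 p0 p3 (-p2)).
Proof.
  apply (is_derive_comp (fun t => Qf t p0 p1 p2 p3) (fun x => k*(x-b))).
  apply Qf_deriv. auto_derive; auto; ring.
Qed.

Definition pw (f g : R -> R) (b x : R) : R := if Rlt_dec x b then f x else g x.

Lemma der_eq (f : R -> R) (x d d' : R) : is_derive f x d -> d = d' -> is_derive f x d'.
Proof. intros H ->; exact H. Qed.

Lemma der_scal (c : R) (f : R -> R) (x d : R) : is_derive f x d -> is_derive (fun x => c * f x) x (c * d).
Proof. intros H. apply (is_derive_scal f x c d H). Qed.

Lemma pw_der_b (f g : R -> R) (b l : R) : is_derive f b l -> is_derive g b l -> f b = g b ->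
  is_derive (pw f g b) b l.
Proof.
  intros Hf Hg E. apply is_derive_Reals in Hf. apply is_derive_Reals in Hg.
  apply is_derive_Reals. intros eps Heps.
  destruct (Hf eps Heps) as [d1 H1]. destruct (Hg eps Heps) as [d2 H2].
  assert (Hd : 0 < Rmin d1 d2) by (apply Rmin_pos; apply cond_pos).
  exists (mkposreal _ Hd). intros h hn hl. simpl in hl. unfold pw.
  destruct (Rlt_dec b b) as [Hbb|_]; [lra|].
  destruct (Rlt_dec (b+h) b) as [Hl|Hl].
  - rewrite <- E. apply H1; auto. apply Rlt_le_trans with (1:=hl). apply Rmin_l.
  - apply H2; auto. apply Rlt_le_trans with (1:=hl). apply Rmin_r.
Qed.

Lemma pw_loc_l (f g : R -> R) (b x : R) : x < b -> locally x (fun t => f t = pw f g b t).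
Proof.
  intros H. apply filter_imp with (fun t => t < b).
  - intros t Ht. unfold pw. destruct (Rlt_dec t b); tauto.
  - apply (open_lt b x H).
Qed.

Lemma pw_loc_r (f g : R -> R) (b x : R) : b < x -> locally x (fun t => g t = pw f g b t).
Proof.
  intros H. apply filter_imp with (fun t => b < t).
  - intros t Ht. unfold pw. destruct (Rlt_dec t b); [lra|auto].
  - apply (open_gt b x H).
Qed.

Lemma pw_der_ne (f g df dg : R -> R) (b x : R) : x <> b ->
  (forall t, is_derive f t (df t)) -> (forall t, is_derive g t (dg t)) ->
  is_derive (pw f g b) x (pw df dg b x).
Proof.
  intros Hx Hf Hg. destruct (Rlt_dec x b) as [Hl|Hl].
  - unfold pw at 2. destruct (Rlt_dec x b); [|tauto].
    apply is_derive_ext_loc with f; [apply pw_loc_l; auto| apply Hf].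
  - assert (b < x) by lra. unfold pw at 2. destruct (Rlt_dec x b); [tauto|].
    apply is_derive_ext_loc with g; [apply pw_loc_r; auto| apply Hg].
Qed.

Lemma pw_der_all (f g df dg : R -> R) (b x : R) :
  (forall t, is_derive f t (df t)) -> (forall t, is_derive g t (dg t)) ->
  f b = g b -> df b = dg b ->
  is_derive (pw f g b) x (pw df dg b x).
Proof.
  intros Hf Hg E1 E2. destruct (Req_dec x b) as [->|Hx].
  - unfold pw at 2. destruct (Rlt_dec b b); [lra|].
    apply pw_der_b; auto. rewrite <- E2. apply Hf.
  - apply pw_der_ne; auto.
Qed.

Lemma pw_cont (f g : R -> R) (b x : R) : (forall t, continuous f t) -> (forall t, continuous g t) ->
  f b = g b -> continuous (pw f g b) x.
Proof.
  intros Hf Hg E. destruct (Req_dec x b) as [->|Hx].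
  - unfold continuous. apply filterlim_locally. intros eps.
    generalize (proj1 (filterlim_locally _ _) (Hf b) eps).
    generalize (proj1 (filterlim_locally _ _) (Hg b) eps).
    intros H1 H2. apply filter_imp with (2 := filter_and _ _ H1 H2).
    intros t [Ht1 Ht2]. unfold pw. destruct (Rlt_dec b b); [lra|].
    destruct (Rlt_dec t b); [rewrite <- E; auto | auto].
  - destruct (Rlt_dec x b) as [Hl|Hl].
    + apply continuous_ext_loc with f. apply pw_loc_l; auto.
      unfold pw; destruct (Rlt_dec x b); [apply Hf|tauto].
    + assert (b < x) by lra.
      apply continuous_ext_loc with g. apply pw_loc_r; auto.
      unfold pw; destruct (Rlt_dec x b); [tauto|apply Hg].
Qed.

Definition UA0 a m b0 b1 b2 b3 x := P (m*(x-a)) b0 b1 b2 b3.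
Definition UA1 a m b0 b1 b2 b3 x := m * P (m*(x-a)) b1 b2 b3 (-4*b0).
Definition UA2 a m b0 b1 b2 b3 x := m^2 * P (m*(x-a)) b2 b3 (-4*b0) (-4*b1).
Definition UA3 a m b0 b1 b2 b3 x := m^3 * P (m*(x-a)) b3 (-4*b0) (-4*b1) (-4*b2).
Definition UB0 k b u0 c1 c2 x := Qf (k*(x-b)) u0 c1 0 c2.
Definition UB1 k b u0 c1 c2 x := k * Qf (k*(x-b)) c1 u0 c2 0.
Definition UB2 k b u0 c1 c2 x := k^2 * Qf (k*(x-b)) u0 c1 0 (-c2).
Definition UB3 k b u0 c1 c2 x := k^3 * Qf (k*(x-b)) c1 u0 (-c2) 0.

Lemma dUA0 a m b0 b1 b2 b3 t : is_derive (UA0 a m b0 b1 b2 b3) t (UA1 a m b0 b1 b2 b3 t).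
Proof. apply P_comp. Qed.
Lemma dUA1 a m b0 b1 b2 b3 t : is_derive (UA1 a m b0 b1 b2 b3) t (UA2 a m b0 b1 b2 b3 t).
Proof. eapply der_eq. apply der_scal, P_comp. unfold UA2. ring. Qed.
Lemma dUA2 a m b0 b1 b2 b3 t : is_derive (UA2 a m b0 b1 b2 b3) t (UA3 a m b0 b1 b2 b3 t).
Proof. eapply der_eq. apply der_scal, P_comp. unfold UA3. ring. Qed.
Lemma dUA3 a m b0 b1 b2 b3 t : is_derive (UA3 a m b0 b1 b2 b3) t (-(4*m^4 * UA0 a m b0 b1 b2 b3 t)).
Proof. eapply der_eq. apply der_scal, P_comp. unfold UA0, P. ring. Qed.
Lemma dUB0 k b u0 c1 c2 t : is_derive (UB0 k b u0 c1 c2) t (UB1 k b u0 c1 c2 t).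
Proof. eapply der_eq. apply Qf_comp. unfold UB1, Qf. ring. Qed.
Lemma dUB1 k b u0 c1 c2 t : is_derive (UB1 k b u0 c1 c2) t (UB2 k b u0 c1 c2 t).
Proof. eapply der_eq. apply der_scal, Qf_comp. unfold UB2, Qf. ring. Qed.
Lemma dUB2 k b u0 c1 c2 t : is_derive (UB2 k b u0 c1 c2) t (UB3 k b u0 c1 c2 t).
Proof. eapply der_eq. apply der_scal, Qf_comp. unfold UB3, Qf. ring. Qed.
Lemma dUB3 k b u0 c1 c2 t : is_derive (UB3 k b u0 c1 c2) t (- (- (k^4) * UB0 k b u0 c1 c2 t)).
Proof. eapply der_eq. apply der_scal, Qf_comp. unfold UB0, Qf. ring. Qed.

Lemma P0 c0 c1 c2 c3 : P 0 c0 c1 c2 c3 = c0.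
Proof. unfold P, chf, shf. rewrite Ropp_0, exp_0, cos_0, sin_0. field. Qed.

Lemma cont_of_der (f df : R -> R) : (forall t, is_derive f t (df t)) -> forall t, continuous f t.
Proof. intros H t. apply (@ex_derive_continuous R_AbsRing R_NormedModule). exists (df t). apply H. Qed.

Lemma construct a b m k b0 b1 b2 b3 u0 c1 c2 al0 al1 al2 al3 :
  a < b ->
  UA0 a m b0 b1 b2 b3 b = UB0 k b u0 c1 c2 b ->
  UA1 a m b0 b1 b2 b3 b = UB1 k b u0 c1 c2 b ->
  UA2 a m b0 b1 b2 b3 b = UB2 k b u0 c1 c2 b ->
  UA3 a m b0 b1 b2 b3 b = UB3 k b u0 c1 c2 b ->
  b0 = al0 -> m * b1 = al1 -> m^2 * b2 = al2 -> m^3 * b3 = al3 ->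
  is_solution a b (4*m^4) (k^4) al0 al1 al2 al3
    (pw (UA0 a m b0 b1 b2 b3) (UB0 k b u0 c1 c2) b)
    (pw (UA1 a m b0 b1 b2 b3) (UB1 k b u0 c1 c2) b)
    (pw (UA2 a m b0 b1 b2 b3) (UB2 k b u0 c1 c2) b)
    (pw (UA3 a m b0 b1 b2 b3) (UB3 k b u0 c1 c2) b).
Proof.
  intros Hab G0 G1 G2 G3 I0 I1 I2 I3.
  assert (Hc : forall (f g : R -> R), (forall t, continuous f t) ->
     filterlim (pw f g b) (at_right a) (locally (pw f g b a))).
  { intros f g Hf. eapply filterlim_filter_le_1.
    apply filter_le_within.
    apply continuous_ext_loc with f. apply pw_loc_l; auto.
    unfold pw; destruct (Rlt_dec a b); [apply Hf|tauto]. }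
  assert (Ha : forall f g : R -> R, pw f g b a = f a).
  { intros f g. unfold pw. destruct (Rlt_dec a b); [auto|tauto]. }
  unfold is_solution. split; [|split; [|split; [|split; [|split; [|split]]]]].
  - intros x Hx. split; [|split; [|split]].
    + apply pw_der_all; auto. intros; apply dUA0. intros; apply dUB0.
    + apply pw_der_all; auto. intros; apply dUA1. intros; apply dUB1.
    + apply pw_der_all; auto. intros; apply dUA2. intros; apply dUB2.
    + apply pw_cont; auto. apply cont_of_der with (1 := dUA3 a m b0 b1 b2 b3).
      apply cont_of_der with (1 := dUB3 k b u0 c1 c2).
  - apply Hc. apply cont_of_der with (1 := dUA0 a m b0 b1 b2 b3).
  - apply Hc. apply cont_of_der with (1 := dUA1 a m b0 b1 b2 b3).
  - apply Hc. apply cont_of_der with (1 := dUA2 a m b0 b1 b2 b3).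
  - apply Hc. apply cont_of_der with (1 := dUA3 a m b0 b1 b2 b3).
  - intros x Hx Hxb. eapply der_eq. apply pw_der_ne; auto.
    intros; apply dUA3. intros; apply dUB3.
    unfold pw, Q0. destruct (Rlt_dec x b); ring.
  - rewrite !Ha. unfold UA0, UA1, UA2, UA3. rewrite Rminus_diag, Rmult_0_r, !P0.
    repeat split; auto.
Qed.

Lemma derF (w0 w1 w2 w3 : R -> R) q K x :
  is_derive w0 x (w1 x) -> is_derive w1 x (w2 x) -> is_derive w2 x (w3 x) ->
  is_derive w3 x (-(q * w0 x)) ->
  is_derive (fun x => (w0 x * w0 x + w1 x * w1 x + w2 x * w2 x + w3 x * w3 x) * exp (-(K*x))) x
   ((2*(w0 x * w1 x + w1 x * w2 x + w2 x * w3 x - q * w0 x * w3 x)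
      - K * (w0 x * w0 x + w1 x * w1 x + w2 x * w2 x + w3 x * w3 x)) * exp (-(K*x))).
Proof.
  intros H0 H1 H2 H3. auto_derive.
  - repeat split; eexists; eauto.
  - replace (Derive (fun x0 => w0 x0) x) with (w1 x) by (symmetry; apply is_derive_unique; exact H0).
    replace (Derive (fun x0 => w1 x0) x) with (w2 x) by (symmetry; apply is_derive_unique; exact H1).
    replace (Derive (fun x0 => w2 x0) x) with (w3 x) by (symmetry; apply is_derive_unique; exact H2).
    replace (Derive (fun x0 => w3 x0) x) with (-(q * w0 x)) by (symmetry; apply is_derive_unique; exact H3).
    simpl. ring.
Qed.

Lemma contF (w0 w1 w2 w3 : R -> R) K x :
  continuous w0 x -> continuous w1 x -> continuous w2 x -> continuous w3 x ->
  continuity_pt (fun x => (w0 x * w0 x + w1 x * w1 x + w2 x * w2 x + w3 x * w3 x) * exp (-(K*x))) x.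
Proof.
  intros C0 C1 C2 C3. apply continuity_pt_filterlim.
  apply (continuous_mult (fun x => w0 x * w0 x + w1 x * w1 x + w2 x * w2 x + w3 x * w3 x)
     (fun x => exp (-(K*x)))).
  - apply (continuous_plus (fun x => w0 x * w0 x + w1 x * w1 x + w2 x * w2 x) (fun x => w3 x * w3 x)).
    apply (continuous_plus (fun x => w0 x * w0 x + w1 x * w1 x) (fun x => w2 x * w2 x)).
    apply (continuous_plus (fun x => w0 x * w0 x) (fun x => w1 x * w1 x)).
    exact (continuous_mult w0 w0 x C0 C0).
    exact (continuous_mult w1 w1 x C1 C1).
    exact (continuous_mult w2 w2 x C2 C2).
    exact (continuous_mult w3 w3 x C3 C3).
  - apply (@ex_derive_continuous R_AbsRing R_NormedModule). auto_derive. auto.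
Qed.

Lemma signF (q A B K w0 w1 w2 w3 : R) : 0 <= A -> 0 <= B -> K = 2 + A + B -> (q = A \/ q = -B) ->
  2*(w0 * w1 + w1 * w2 + w2 * w3 - q * w0 * w3)
      - K * (w0 * w0 + w1 * w1 + w2 * w2 + w3 * w3) <= 0.
Proof.
  intros HA HB HK Hq. subst K.
  assert (0 <= (w0-w1)*(w0-w1)) by apply Rle_0_sqr. assert (0 <= (w1-w2)*(w1-w2)) by apply Rle_0_sqr.
  assert (0 <= (w2-w3)*(w2-w3)) by apply Rle_0_sqr.
  assert (0 <= A*((w0+w3)*(w0+w3))) by (apply Rmult_le_pos; [auto| try apply Rle_0_sqr; generalize (Rle_0_sqr w0) (Rle_0_sqr w1) (Rle_0_sqr w2) (Rle_0_sqr w3); unfold Rsqr; lra]).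
  assert (0 <= B*((w0-w3)*(w0-w3))) by (apply Rmult_le_pos; [auto| try apply Rle_0_sqr; generalize (Rle_0_sqr w0) (Rle_0_sqr w1) (Rle_0_sqr w2) (Rle_0_sqr w3); unfold Rsqr; lra]).
  assert (0 <= A*(w1*w1+w2*w2)) by (apply Rmult_le_pos; [auto| try apply Rle_0_sqr; generalize (Rle_0_sqr w0) (Rle_0_sqr w1) (Rle_0_sqr w2) (Rle_0_sqr w3); unfold Rsqr; lra]).
  assert (0 <= B*(w1*w1+w2*w2)) by (apply Rmult_le_pos; [auto| try apply Rle_0_sqr; generalize (Rle_0_sqr w0) (Rle_0_sqr w1) (Rle_0_sqr w2) (Rle_0_sqr w3); unfold Rsqr; lra]).
  assert (0 <= A*(w0*w0+w3*w3)) by (apply Rmult_le_pos; [auto| try apply Rle_0_sqr; generalize (Rle_0_sqr w0) (Rle_0_sqr w1) (Rle_0_sqr w2) (Rle_0_sqr w3); unfold Rsqr; lra]).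
  assert (0 <= B*(w0*w0+w3*w3)) by (apply Rmult_le_pos; [auto| try apply Rle_0_sqr; generalize (Rle_0_sqr w0) (Rle_0_sqr w1) (Rle_0_sqr w2) (Rle_0_sqr w3); unfold Rsqr; lra]).
  destruct Hq as [-> | ->]; nra.
Qed.

Lemma ball_R (x e y : R) : ball x e y -> Rabs (y - x) < e.
Proof. intros H. exact H. Qed.

Lemma uniq a b A B al0 al1 al2 al3 u u1 u2 u3 v v1 v2 v3 :
  0 <= A -> 0 <= B ->
  is_solution a b A B al0 al1 al2 al3 u u1 u2 u3 ->
  is_solution a b A B al0 al1 al2 al3 v v1 v2 v3 ->
  forall y, a < y -> u y = v y /\ u1 y = v1 y /\ u2 y = v2 y /\ u3 y = v3 y.
Proof.
  intros HA HB [Du [Lu0 [Lu1 [Lu2 [Lu3 [Du3 [Iu0 [Iu1 [Iu2 Iu3]]]]]]]]]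
               [Dv [Lv0 [Lv1 [Lv2 [Lv3 [Dv3 [Iv0 [Iv1 [Iv2 Iv3]]]]]]]]].
  set (K := 2 + A + B).
  set (w0 := fun x => u x - v x). set (w1 := fun x => u1 x - v1 x).
  set (w2 := fun x => u2 x - v2 x). set (w3 := fun x => u3 x - v3 x).
  set (F := fun x => (w0 x * w0 x + w1 x * w1 x + w2 x * w2 x + w3 x * w3 x) * exp (-(K*x))).
  set (dF := fun x => (2*(w0 x * w1 x + w1 x * w2 x + w2 x * w3 x - Q0 a b A B x * w0 x * w3 x)
      - K * (w0 x * w0 x + w1 x * w1 x + w2 x * w2 x + w3 x * w3 x)) * exp (-(K*x))).
  assert (HD : forall x, a < x -> x <> b -> is_derive F x (dF x)).
  { intros x Hx Hxb. destruct (Du x Hx) as [Du0 [Du1 [Du2 _]]].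
    destruct (Dv x Hx) as [Dv0 [Dv1 [Dv2 _]]].
    apply derF.
    - apply (is_derive_minus u v x (u1 x) (v1 x)); auto.
    - apply (is_derive_minus u1 v1 x (u2 x) (v2 x)); auto.
    - apply (is_derive_minus u2 v2 x (u3 x) (v3 x)); auto.
    - eapply der_eq. apply (is_derive_minus u3 v3 x); auto.
      simpl. unfold minus, plus, opp, w0; simpl. ring. }
  assert (Hneg : forall x, dF x <= 0).
  { intros x. unfold dF. rewrite <- (Rmult_0_l (exp (-(K*x)))).
    apply Rmult_le_compat_r. apply Rlt_le, exp_pos.
    apply signF with A B; auto. unfold Q0. destruct (Rlt_dec x b); auto. }
  assert (HC : forall x, a < x -> continuity_pt F x).
  { intros x Hx. destruct (Du x Hx) as [Du0 [Du1 [Du2 Cu3]]].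
    destruct (Dv x Hx) as [Dv0 [Dv1 [Dv2 Cv3]]].
    apply contF.
    - apply (continuous_minus u v). apply (@ex_derive_continuous R_AbsRing R_NormedModule); eexists; eauto.
      apply (@ex_derive_continuous R_AbsRing R_NormedModule); eexists; eauto.
    - apply (continuous_minus u1 v1). apply (@ex_derive_continuous R_AbsRing R_NormedModule); eexists; eauto.
      apply (@ex_derive_continuous R_AbsRing R_NormedModule); eexists; eauto.
    - apply (continuous_minus u2 v2). apply (@ex_derive_continuous R_AbsRing R_NormedModule); eexists; eauto.
      apply (@ex_derive_continuous R_AbsRing R_NormedModule); eexists; eauto.
    - apply (continuous_minus u3 v3); auto. }
  assert (Hmono0 : forall x y, a < x -> x <= y -> (forall t, x < t < y -> t <> b) -> F y <= F x).
  { intros x y Hx Hxy Hb. destruct (MVT_gen F x y dF) as [c [Hc Heq]].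
    - intros t Ht. rewrite Rmin_left in Ht by lra. rewrite Rmax_right in Ht by lra.
      apply HD. lra. apply Hb. lra.
    - intros t Ht. rewrite Rmin_left in Ht by lra. rewrite Rmax_right in Ht by lra.
      apply HC. lra.
    - assert (dF c * (y - x) <= 0).
      { rewrite <- (Rmult_0_l (y-x)). apply Rmult_le_compat_r; [lra|apply Hneg]. }
      lra. }
  assert (Hmono : forall x y, a < x -> x <= y -> F y <= F x).
  { intros x y Hx Hxy. destruct (Rle_dec y b) as [Hyb|Hyb].
    - apply Hmono0; auto. intros t Ht. lra.
    - destruct (Rle_dec b x) as [Hbx|Hbx].
      + apply Hmono0; auto. intros t Ht. lra.
      + apply Rle_trans with (F b).
        * apply Hmono0; [lra|lra|]. intros t Ht. lra.
        * apply Hmono0; [lra|lra|]. intros t Ht. lra. }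
  assert (Fpos : forall x, 0 <= F x).
  { intros x. unfold F. apply Rmult_le_pos; [nra|apply Rlt_le, exp_pos]. }
  intros y Hy.
  assert (Fy0 : F y <= 0).
  { destruct (Rle_dec (F y) 0) as [H|H]; auto. exfalso.
    assert (Hfy : 0 < F y) by lra.
    set (ea := exp (-(K*a))). assert (Hea : 0 < ea) by apply exp_pos.
    set (e := Rmin 1 (F y / (32 * ea))).
    assert (He : 0 < e). { apply Rmin_pos; [lra|]. apply Rdiv_lt_0_compat; lra. }
    assert (He1 : e <= 1) by apply Rmin_l.
    assert (He2 : e <= F y / (32 * ea)) by apply Rmin_r.
    set (ep := mkposreal e He).
    pose proof (proj1 (filterlim_locally _ _) Lu0 ep) as E0.
    pose proof (proj1 (filterlim_locally _ _) Lu1 ep) as E1.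
    pose proof (proj1 (filterlim_locally _ _) Lu2 ep) as E2.
    pose proof (proj1 (filterlim_locally _ _) Lu3 ep) as E3.
    pose proof (proj1 (filterlim_locally _ _) Lv0 ep) as E4.
    pose proof (proj1 (filterlim_locally _ _) Lv1 ep) as E5.
    pose proof (proj1 (filterlim_locally _ _) Lv2 ep) as E6.
    pose proof (proj1 (filterlim_locally _ _) Lv3 ep) as E7.
    pose proof (filter_and _ _ E0 (filter_and _ _ E1 (filter_and _ _ E2 (filter_and _ _ E3
      (filter_and _ _ E4 (filter_and _ _ E5 (filter_and _ _ E6 E7))))))) as EE.
    destruct EE as [d Hd].
    set (z := a + Rmin d (y - a) / 2).
    assert (Hmin : 0 < Rmin d (y - a)) by (apply Rmin_pos; [apply cond_pos|lra]).
    assert (Hz1 : a < z) by (unfold z; lra).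
    assert (Hz2 : z <= y) by (unfold z; generalize (Rmin_r d (y-a)); lra).
    assert (Hzb : ball a d z).
    { unfold ball; simpl; unfold AbsRing_ball, abs, minus, plus, opp; simpl.
      unfold z. replace (a + Rmin d (y - a) / 2 + - a) with (Rmin d (y - a) / 2) by ring.
      rewrite Rabs_pos_eq by lra. generalize (Rmin_l d (y-a)). generalize (cond_pos d). lra. }
    destruct (Hd z Hzb Hz1) as [B0 [B1 [B2 [B3 [B4 [B5 [B6 B7]]]]]]].
    apply ball_R in B0, B1, B2, B3, B4, B5, B6, B7. simpl in *.
    rewrite Iu0 in B0. rewrite Iu1 in B1. rewrite Iu2 in B2. rewrite Iu3 in B3.
    rewrite Iv0 in B4. rewrite Iv1 in B5. rewrite Iv2 in B6. rewrite Iv3 in B7.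
    assert (Hw0 : Rabs (w0 z) < 2*e).
    { unfold w0. replace (u z - v z) with ((u z - al0) - (v z - al0)) by ring.
      eapply Rle_lt_trans. apply Rabs_triang. rewrite Rabs_Ropp. lra. }
    assert (Hw1 : Rabs (w1 z) < 2*e).
    { unfold w1. replace (u1 z - v1 z) with ((u1 z - al1) - (v1 z - al1)) by ring.
      eapply Rle_lt_trans. apply Rabs_triang. rewrite Rabs_Ropp. lra. }
    assert (Hw2 : Rabs (w2 z) < 2*e).
    { unfold w2. replace (u2 z - v2 z) with ((u2 z - al2) - (v2 z - al2)) by ring.
      eapply Rle_lt_trans. apply Rabs_triang. rewrite Rabs_Ropp. lra. }
    assert (Hw3 : Rabs (w3 z) < 2*e).
    { unfold w3. replace (u3 z - v3 z) with ((u3 z - al3) - (v3 z - al3)) by ring.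
      eapply Rle_lt_trans. apply Rabs_triang. rewrite Rabs_Ropp. lra. }
    assert (Sq : forall t, Rabs t < 2*e -> t * t <= 4*e).
    { intros t Ht. assert (0 <= Rabs t) by apply Rabs_pos.
      assert (Rabs t * Rabs t = t * t) by (rewrite <- Rabs_mult; apply Rabs_pos_eq; apply Rle_0_sqr).
      nra. }
    assert (HE : w0 z * w0 z + w1 z * w1 z + w2 z * w2 z + w3 z * w3 z <= 16 * e).
    { generalize (Sq _ Hw0) (Sq _ Hw1) (Sq _ Hw2) (Sq _ Hw3). lra. }
    assert (Hex : exp (-(K*z)) <= ea).
    { unfold ea. destruct (Req_dec (-(K*z)) (-(K*a))) as [Q|Q]; [rewrite Q; lra|].
      apply Rlt_le, exp_increasing. unfold K. nra. }
    assert (Fz : F z <= 16 * e * ea).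
    { unfold F. apply Rmult_le_compat; auto.
      generalize (Rle_0_sqr (w0 z)) (Rle_0_sqr (w1 z)) (Rle_0_sqr (w2 z)) (Rle_0_sqr (w3 z)); unfold Rsqr; lra.
      apply Rlt_le, exp_pos. }
    assert (Fyz : F y <= F z) by (apply Hmono; auto).
    assert (16 * e * ea <= F y / 2).
    { apply Rle_trans with (16 * (F y / (32 * ea)) * ea).
      apply Rmult_le_compat_r; lra. right. field. lra. }
    lra. }
  assert (HF : F y = 0) by (generalize (Fpos y); lra).
  unfold F in HF. apply Rmult_integral in HF. destruct HF as [HF|HF];
    [|generalize (exp_pos (-(K*y))); lra].
  generalize (Rle_0_sqr (w0 y)) (Rle_0_sqr (w1 y)) (Rle_0_sqr (w2 y)) (Rle_0_sqr (w3 y)); unfold Rsqr.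
  intros S0 S1 S2 S3.
  assert (Z0 : w0 y * w0 y = 0) by lra. assert (Z1 : w1 y * w1 y = 0) by lra.
  assert (Z2 : w2 y * w2 y = 0) by lra. assert (Z3 : w3 y * w3 y = 0) by lra.
  apply Rmult_integral in Z0, Z1, Z2, Z3. unfold w0, w1, w2, w3 in *.
  repeat split; lra.
Qed.

Lemma chf_pos t : 0 < chf t.
Proof. unfold chf. generalize (exp_pos t) (exp_pos (-t)). lra. Qed.
Lemma shf_pos t : 0 < t -> 0 < shf t.
Proof. intros H. unfold shf. generalize (exp_increasing (-t) t ltac:(lra)). lra. Qed.

Definition CC := chf (2*PI).
Definition SS := shf (2*PI).
Definition ch2 := chf (PI/2).
Definition sh2 := shf (PI/2).

Lemma P_2PI c0 c1 c2 c3 : P (2*PI) c0 c1 c2 c3 = c0*CC + c1*SS/2 - c3*SS/4.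
Proof. unfold P, CC, SS. rewrite cos_2PI, sin_2PI. field. Qed.

Lemma Qf0 p0 p1 p2 p3 : Qf 0 p0 p1 p2 p3 = p0 + p2.
Proof. unfold Qf, chf, shf. rewrite Ropp_0, exp_0, cos_0, sin_0. field. Qed.

Lemma QfPI2 p0 p1 p2 p3 : Qf (PI/2) p0 p1 p2 p3 = p0 * ch2 + p1 * sh2 + p3.
Proof. unfold Qf, ch2, sh2. rewrite cos_PI2, sin_PI2. ring. Qed.

Section Par.
Variables al0 al1 al2 al3 : R.
Definition v0 mu := P (2*PI) al0 (al1*mu) (al2*mu^2) (al3*mu^3).
Definition v1 mu := P (2*PI) (al1*mu) (al2*mu^2) (al3*mu^3) (-4*al0).
Definition v2 mu := P (2*PI) (al2*mu^2) (al3*mu^3) (-4*al0) (-4*(al1*mu)).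
Definition v3 mu := P (2*PI) (al3*mu^3) (-4*al0) (-4*(al1*mu)) (-4*(al2*mu^2)).
Definition posp y := (y + Rabs y)/2.
Definition G mu := ch2*(v1 mu * v2 mu + posp (v0 mu) * v3 mu) + 2*sh2*posp (v2 mu) * sqrt (posp (v0 mu) * posp (v2 mu)).
End Par.

Lemma pos_cont (f : R -> R) x : continuous f x -> continuous (fun y => posp (f y)) x.
Proof.
  intros H. unfold posp.
  apply (continuous_mult (fun y => f y + Rabs (f y)) (fun _ => /2)).
  apply (continuous_plus f (fun y => Rabs (f y))); auto.
  apply continuous_Rabs_comp; auto. apply continuous_const.
Qed.

Lemma pol_cont (f : R -> R) x : (forall y, ex_derive f y) -> continuous f x.
Proof. intros H. apply (@ex_derive_continuous R_AbsRing R_NormedModule). apply H. Qed.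

Lemma G_cont al0 al1 al2 al3 : continuity (G al0 al1 al2 al3).
Proof.
  intros x. apply continuity_pt_filterlim. unfold G.
  assert (C0 : continuous (v0 al0 al1 al2 al3) x) by (apply pol_cont; intros; unfold v0, P, chf, shf; auto_derive; auto).
  assert (C1 : continuous (v1 al0 al1 al2 al3) x) by (apply pol_cont; intros; unfold v1, P, chf, shf; auto_derive; auto).
  assert (C2 : continuous (v2 al0 al1 al2 al3) x) by (apply pol_cont; intros; unfold v2, P, chf, shf; auto_derive; auto).
  assert (C3 : continuous (v3 al0 al1 al2 al3) x) by (apply pol_cont; intros; unfold v3, P, chf, shf; auto_derive; auto).
  apply (continuous_plus (fun mu => ch2 * (v1 al0 al1 al2 al3 mu * v2 al0 al1 al2 al3 mu + posp (v0 al0 al1 al2 al3 mu) * v3 al0 al1 al2 al3 mu))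
     (fun mu => 2 * sh2 * posp (v2 al0 al1 al2 al3 mu) * sqrt (posp (v0 al0 al1 al2 al3 mu) * posp (v2 al0 al1 al2 al3 mu)))).
  - apply (continuous_mult (fun _ => ch2)). apply continuous_const.
    apply (continuous_plus (fun mu => v1 al0 al1 al2 al3 mu * v2 al0 al1 al2 al3 mu)).
    apply (continuous_mult (v1 al0 al1 al2 al3)); auto.
    apply (continuous_mult (fun mu => posp (v0 al0 al1 al2 al3 mu))); auto. apply pos_cont; auto.
  - apply (continuous_mult (fun mu => 2 * sh2 * posp (v2 al0 al1 al2 al3 mu))).
    apply (continuous_mult (fun _ => 2 * sh2)). apply continuous_const. apply pos_cont; auto.
    apply continuous_sqrt_comp.
    apply (continuous_mult (fun mu => posp (v0 al0 al1 al2 al3 mu))); apply pos_cont; auto.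
Qed.

Ltac ptac := repeat (assumption || apply Rmult_lt_0_compat || apply Rdiv_lt_0_compat || apply pow_lt || apply Rinv_0_lt_compat); try lra.

Lemma pos_id y : 0 <= y -> posp y = y.
Proof. intros H. unfold posp. rewrite Rabs_pos_eq; lra. Qed.
Lemma pos_0 y : y <= 0 -> posp y = 0.
Proof. intros H. unfold posp. rewrite Rabs_left1; lra. Qed.

Lemma CS_pos : 0 < CC /\ 0 < SS /\ 0 < ch2 /\ 0 < sh2.
Proof.
  unfold CC, SS, ch2, sh2. generalize PI_RGT_0; intros.
  repeat split; try apply chf_pos; apply shf_pos; lra.
Qed.

Lemma params al0 al1 al2 al3 : 0 < al0 -> 0 < al1 -> 0 < al2 -> 0 < al3 ->
  exists mu, 0 < mu /\ 0 < v0 al0 al1 al2 al3 mu /\ 0 < v2 al0 al1 al2 al3 mu /\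
    0 < v1 al0 al1 al2 al3 mu /\
    ch2*(v1 al0 al1 al2 al3 mu * v2 al0 al1 al2 al3 mu + v0 al0 al1 al2 al3 mu * v3 al0 al1 al2 al3 mu)
    + 2*sh2*v2 al0 al1 al2 al3 mu * sqrt (v0 al0 al1 al2 al3 mu * v2 al0 al1 al2 al3 mu) = 0.
Proof.
  intros h0 h1 h2 h3. destruct CS_pos as [HC [HS [Hc Hs]]].
  assert (E0 : forall mu, v0 al0 al1 al2 al3 mu = CC*al0 + SS/2*(al1*mu) - SS/4*(al3*mu^3))
    by (intros; unfold v0; rewrite P_2PI; field).
  assert (E1 : forall mu, v1 al0 al1 al2 al3 mu = CC*al1*mu + SS/2*al2*mu^2 + SS*al0)
    by (intros; unfold v1; rewrite P_2PI; field).
  assert (E2 : forall mu, v2 al0 al1 al2 al3 mu = CC*al2*mu^2 + SS/2*al3*mu^3 + SS*al1*mu)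
    by (intros; unfold v2; rewrite P_2PI; field).
  assert (E3 : forall mu, v3 al0 al1 al2 al3 mu = CC*al3*mu^3 - 2*SS*al0 + SS*al2*mu^2)
    by (intros; unfold v3; rewrite P_2PI; field).
  assert (P12 : forall mu, 0 < mu -> 0 < v1 al0 al1 al2 al3 mu /\ 0 < v2 al0 al1 al2 al3 mu).
  { intros mu Hmu. rewrite E1, E2. split.
    - assert (0 < CC*al1*mu) by ptac.
      assert (0 < SS/2*al2*mu^2) by ptac.
      assert (0 < SS*al0) by ptac. lra.
    - assert (0 < CC*al2*mu^2) by ptac.
      assert (0 < SS/2*al3*mu^3) by ptac.
      assert (0 < SS*al1*mu) by ptac. lra. }
  set (p := 8*CC*al0/(SS*al3)). set (q := 4*al1/al3).
  assert (Hp : 0 < p) by (unfold p; apply Rdiv_lt_0_compat; [nra| apply Rmult_lt_0_compat; auto]).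
  assert (Hq : 0 < q) by (unfold q; apply Rdiv_lt_0_compat; lra).
  set (mu1 := 1 + p + q).
  assert (Hmu1 : 1 <= mu1) by (unfold mu1; lra).
  assert (Hv0 : v0 al0 al1 al2 al3 mu1 <= 0).
  { rewrite E0.
    assert (m3 : mu1 <= mu1^3) by (simpl; nra).
    assert (m2 : mu1*mu1 <= mu1^3) by (simpl; nra).
    assert (A1 : SS*al3*p/8 = CC*al0) by (unfold p; field; lra).
    assert (A2 : SS*al3*q/8 = SS*al1/2) by (unfold q; field; lra).
    assert (B1 : SS*al3*p/8 <= SS*al3*mu1^3/8).
    { apply Rmult_le_compat_r; [lra|]. apply Rmult_le_compat_l; [nra|]. unfold mu1 in *; lra. }
    assert (B2 : SS*al3*q*mu1/8 <= SS*al3*mu1^3/8).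
    { apply Rmult_le_compat_r; [lra|]. rewrite Rmult_assoc. apply Rmult_le_compat_l; [nra|].
      apply Rle_trans with (mu1*mu1); auto. apply Rmult_le_compat_r; [lra|]. unfold mu1; lra. }
    assert (A3 : SS*al3*q*mu1/8 = SS/2*(al1*mu1)) by (unfold q; field; lra).
    lra. }
  assert (G0 : G al0 al1 al2 al3 0 < 0).
  { assert (a0 : v0 al0 al1 al2 al3 0 = CC*al0) by (rewrite E0; field).
    assert (a1 : v1 al0 al1 al2 al3 0 = SS*al0) by (rewrite E1; field).
    assert (a2 : v2 al0 al1 al2 al3 0 = 0) by (rewrite E2; field).
    assert (a3 : v3 al0 al1 al2 al3 0 = -2*SS*al0) by (rewrite E3; field).
    unfold G. rewrite a0, a1, a2, a3. rewrite (pos_id 0) by lra.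
    rewrite (pos_id (CC*al0)) by nra.
    assert (0 < ch2 * (CC * (SS * (al0 * al0)))) by ptac.
    rewrite !Rmult_0_r, Rmult_0_l. lra. }
  assert (G1 : 0 < G al0 al1 al2 al3 mu1).
  { unfold G. rewrite (pos_0 _ Hv0). destruct (P12 mu1) as [Q1 Q2]; [lra|].
    rewrite Rmult_0_l, Rmult_0_l, sqrt_0, Rmult_0_r, Rplus_0_r, Rplus_0_r.
    apply Rmult_lt_0_compat; auto. apply Rmult_lt_0_compat; auto. }
  destruct (IVT _ 0 mu1 (G_cont al0 al1 al2 al3) ltac:(lra) G0 G1) as [z [Hz Gz]].
  assert (Hz0 : 0 < z).
  { destruct (Req_dec z 0) as [->|?]; [lra|]. lra. }
  destruct (P12 z Hz0) as [Q1 Q2].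
  assert (Hv0z : 0 < v0 al0 al1 al2 al3 z).
  { destruct (Rlt_dec 0 (v0 al0 al1 al2 al3 z)) as [?|Hn]; auto. exfalso.
    unfold G in Gz. rewrite (pos_0 (v0 al0 al1 al2 al3 z)) in Gz by lra.
    rewrite Rmult_0_l, Rmult_0_l, sqrt_0, Rmult_0_r, Rplus_0_r, Rplus_0_r in Gz.
    assert (0 < ch2 * (v1 al0 al1 al2 al3 z * v2 al0 al1 al2 al3 z)) by
      (apply Rmult_lt_0_compat; auto; apply Rmult_lt_0_compat; auto). lra. }
  exists z. split; [auto|split; [auto|split; [auto|split; [auto|]]]].
  unfold G in Gz. rewrite !pos_id in Gz by lra. exact Gz.
Qed.

Theorem proposition1 (a al0 al1 al2 al3 : R)
  (h0 : 0 < al0) (h1 : 0 < al1) (h2 : 0 < al2) (h3 : 0 < al3) :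
  exists b A B, a < b /\ 0 < A /\ 0 < B /\
    (exists u u1 u2 u3, is_solution a b A B al0 al1 al2 al3 u u1 u2 u3) /\
    (forall u u1 u2 u3, is_solution a b A B al0 al1 al2 al3 u u1 u2 u3 ->
       exists zeta, b < zeta /\ u1 zeta = 0 /\ u3 zeta = 0).
Proof.
  destruct (params al0 al1 al2 al3 h0 h1 h2 h3) as [mu [Hmu [Hv0 [Hv2 [Hv1 HG]]]]].
  destruct CS_pos as [HC [HS [Hc Hs]]].
  set (V0 := v0 al0 al1 al2 al3 mu) in *. set (V1 := v1 al0 al1 al2 al3 mu) in *.
  set (V2 := v2 al0 al1 al2 al3 mu) in *. set (V3 := v3 al0 al1 al2 al3 mu) in *.
  set (m := /mu). assert (Hm : 0 < m) by (apply Rinv_0_lt_compat; auto).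
  set (kap := sqrt (V2/V0)).
  assert (Hkap : 0 < kap) by (apply sqrt_lt_R0; apply Rdiv_lt_0_compat; auto).
  assert (Hkk : kap * kap = V2/V0) by (apply sqrt_sqrt; apply Rlt_le, Rdiv_lt_0_compat; auto).
  set (k := m*kap). assert (Hk : 0 < k) by (apply Rmult_lt_0_compat; auto).
  set (b := a + 2*PI*mu).
  assert (Hab : a < b) by (unfold b; generalize PI_RGT_0; intros; assert (0 < 2*PI*mu) by ptac; lra).
  set (u0 := V0). set (c1 := -(u0*sh2/ch2)). set (c2 := m*V1/k - c1).
  assert (Htau : m*(b-a) = 2*PI) by (unfold m, b; field; lra).
  assert (HV2 : V2 = kap*kap*V0) by (rewrite Hkk; field; lra).
  assert (Hsq : sqrt (V0*V2) = V0*kap).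
  { replace (V0*V2) with (Rsqr (V0*kap)) by (unfold Rsqr; rewrite HV2; ring).
    apply sqrt_Rsqr. apply Rlt_le; ptac. }
  rewrite Hsq in HG.
  assert (HV3 : ch2 * V3 = -(ch2*kap^2*V1) - 2*sh2*kap^3*V0).
  { assert (Z : V0 * (ch2 * V3 + ch2*kap^2*V1 + 2*sh2*kap^3*V0) = 0).
    { rewrite <- HG. rewrite HV2. ring. }
    apply Rmult_integral in Z. destruct Z as [Z|Z]; lra. }
  assert (Sol : is_solution a b (4*m^4) (k^4) al0 al1 al2 al3
    (pw (UA0 a m al0 (al1*mu) (al2*mu^2) (al3*mu^3)) (UB0 k b u0 c1 c2) b)
    (pw (UA1 a m al0 (al1*mu) (al2*mu^2) (al3*mu^3)) (UB1 k b u0 c1 c2) b)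
    (pw (UA2 a m al0 (al1*mu) (al2*mu^2) (al3*mu^3)) (UB2 k b u0 c1 c2) b)
    (pw (UA3 a m al0 (al1*mu) (al2*mu^2) (al3*mu^3)) (UB3 k b u0 c1 c2) b)).
  { apply construct; auto.
    - unfold UA0, UB0. rewrite Htau, Rminus_diag, Rmult_0_r, Qf0. rewrite Rplus_0_r. reflexivity.
    - unfold UA1, UB1. rewrite Htau, Rminus_diag, Rmult_0_r, Qf0.
      change (P (2 * PI) (al1 * mu) (al2 * mu ^ 2) (al3 * mu ^ 3) (-4 * al0)) with V1.
      unfold c2. field. lra.
    - unfold UA2, UB2. rewrite Htau, Rminus_diag, Rmult_0_r, Qf0.
      change (P (2 * PI) (al2 * mu ^ 2) (al3 * mu ^ 3) (-4 * al0) (-4 * (al1 * mu))) with V2.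
      unfold k, u0. rewrite HV2. ring.
    - unfold UA3, UB3. rewrite Htau, Rminus_diag, Rmult_0_r, Qf0.
      change (P (2 * PI) (al3 * mu ^ 3) (-4 * al0) (-4 * (al1 * mu)) (-4 * (al2 * mu ^ 2))) with V3.
      unfold c2, c1, k, u0. apply Rmult_eq_reg_l with ch2; [|lra].
      replace (ch2 * (m^3*V3)) with (m^3*(ch2*V3)) by ring. rewrite HV3. field. split; lra.
    - unfold m. field. lra.
    - unfold m. field. lra.
    - unfold m. field. lra. }
  exists b, (4*m^4), (k^4). split; [auto|split; [ptac|split; [ptac|split]]].
  - eexists _, _, _, _. exact Sol.
  - intros u u1 u2 u3 Hu. exists (b + PI/(2*k)).
    assert (Hz : b < b + PI/(2*k)) by (generalize PI_RGT_0; intros; assert (0 < PI/(2*k)) by ptac; lra).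
    split; auto.
    assert (HA0 : 0 <= 4*m^4) by (apply Rlt_le; ptac).
    assert (HB0 : 0 <= k^4) by (apply Rlt_le; ptac).
    destruct (uniq a b (4*m^4) (k^4) al0 al1 al2 al3 u u1 u2 u3 _ _ _ _ HA0 HB0 Hu Sol
      (b + PI/(2*k)) ltac:(lra)) as [_ [E1 [_ E3]]].
    assert (Hth : k*(b + PI/(2*k) - b) = PI/2) by (field; lra).
    rewrite E1, E3. unfold pw. destruct (Rlt_dec (b + PI/(2*k)) b) as [Hl|_]; [lra|].
    unfold UB1, UB3. rewrite Hth, !QfPI2. unfold c1. split; field; lra.
Qed.
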